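(* Each of the following four mechanisms for locating an obnoxious facility on $[0,1]$ is group strategyproof. Here, for a profile $\mathbf x\in[0,1]^n$, $n_1=|\{i:x_i\in[0,\tfrac12]\}|$ and $n_2=|\{i:x_i\in(\tfrac12,1]\}|$. (1) Majority Vote: output $y=0$ if $n_1\le n_2$, else $y=1$. (2) Output the uniform distribution over $[0,1]$. (3) Output $y=0$ with probability $\frac{n_2^2}{n_1^2+n_2^2}$ and $y=1$ with probability $\frac{n_1^2}{n_1^2+n_2^2}$. (4) For a fixed real parameter $p$, output $y=0$ with probability $P_0=\frac{n_2^2+2^pn_1n_2}{n_1^2+n_2^2+2^{p+1}n_1n_2}$ and $y=1$ with probability $1-P_0$.
   Context: Agents $i\in N=\{1,\dots,n\}$ have private locations $x_i\in[0,1]$; agent $i$'s utility from a (possibly random) facility location is its (expected) distance $\mathbb E|x_i-y|$. A mechanism $f$ is group strategyproof if for every profile $\mathbf x$, every coalition $S\subseteq N$ and every joint misreport $\mathbf x_S'$, there exists $i\in S$ whose utility under $f(\mathbf x_S',\mathbf x_{-S})$ is not strictly larger than under $f(\mathbf x)$. *)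

(* Defs.v *)
From HB Require Import structures.
From mathcomp Require Import all_boot all_order all_algebra.
From mathcomp Require Import all_classical all_reals all_analysis.
Set Implicit Arguments. Unset Strict Implicit. Unset Printing Implicit Defensive.
Import Order.TTheory GRing.Theory Num.Theory.
Local Open Scope classical_set_scope.
Local Open Scope ring_scope.

Section ObnoxiousFacility.
Context {R : realType}.

Definition profile (n : nat) := 'I_n -> R.

Definition in01 n (x : profile n) : Prop := forall i, 0 <= x i <= 1.

Definition n1 n (x : profile n) : nat := #|[set i | (0 <= x i) && (x i <= 1/2)]|.
Definition n2 n (x : profile n) : nat := #|[set i | (1/2 < x i) && (x i <= 1)]|.

(* A (possibly random) facility location = a distribution on R (set function). *)
Definition rloc := set R -> \bar R.

Definition lottery01 (q : R) : rloc :=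
  fun A => (q%:E * \d_(0%R:R) A + (1 - q)%:E * \d_(1%R:R) A)%E.

Definition utility (xi : R) (mu : rloc) : \bar R :=
  (\int[mu]_y (`|xi - y|)%:E)%E.

Definition mechanism n := profile n -> rloc.

Definition deviate n (S : {set 'I_n}) (x' x : profile n) : profile n :=
  fun i => if i \in S then x' i else x i.

Definition group_strategyproof n (f : mechanism n) : Prop :=
  forall (x : profile n) (S : {set 'I_n}) (x' : profile n),
    in01 x -> in01 x' -> S != finset.set0 ->
    exists2 i, i \in S &
      (utility (x i) (f (deviate S x' x)) <= utility (x i) (f x))%E.

Definition majority_vote n : mechanism n :=
  fun x => if (n1 x <= n2 x)%N then \d_(0%R:R) else \d_(1%R:R).

Definition uniform_mech n : mechanism n :=
  fun _ => uniform_prob (@ltr01 R).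

Definition square_mech n : mechanism n :=
  fun x => lottery01 ((n2 x)%:R ^+ 2 / ((n1 x)%:R ^+ 2 + (n2 x)%:R ^+ 2)).

Definition P0 (p : R) n (x : profile n) : R :=
  let a := (n1 x)%:R in let b := (n2 x)%:R in
  (b ^+ 2 + 2 `^ p * a * b) / (a ^+ 2 + b ^+ 2 + 2 `^ (p + 1) * a * b).

Definition param_mech (p : R) n : mechanism n :=
  fun x => lottery01 (P0 p x).

End ObnoxiousFacility.

(* Main.v *)
Require Import Defs.
From HB Require Import structures.
From mathcomp Require Import all_boot all_order all_algebra.
From mathcomp Require Import all_classical all_reals all_analysis.
From mathcomp Require Import measurable_realfun.
From mathcomp Require Import ring lra zify.
Import Order.TTheory GRing.Theory Num.Theory.
Local Open Scope ring_scope.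

Section S.
Variable R : realType.

Ltac mfab := apply/measurable_EFinP; apply: measurableT_comp => //; exact: measurable_funB.

Lemma utility_dirac (xi a : R) : utility xi \d_a = (`|xi - a|)%:E.
Proof. by rewrite /utility integral_dirac ?diracE ?mem_set ?mul1e //; mfab. Qed.

Lemma utility_lottery (q xi : R) : 0 <= q <= 1 ->
  utility xi (lottery01 q) = (q * `|xi| + (1 - q) * `|xi - 1|)%:E.
Proof.
move=> /andP[q0 q1].
have q0' : 0 <= q by [].
have q1' : 0 <= 1 - q by rewrite subr_ge0.
have -> : lottery01 q = measure_add (mscale (NngNum q0') (@dirac _ R 0 R))
                                    (mscale (NngNum q1') (@dirac _ R 1 R)).
  by apply/funext => A; rewrite measure_addE.
rewrite /utility ge0_integral_measure_add //; last by mfab.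
rewrite !ge0_integral_mscale //; try by mfab.
rewrite !integral_dirac ?diracE ?mem_set ?mul1e //; try by mfab.
by rewrite /= subr0 -!EFinM -EFinD.
Qed.

Lemma qrange (c a b : R) : 0 <= c -> 0 <= a -> 0 <= b ->
  0 <= (b^+2 + c*a*b)/(a^+2+b^+2+2*c*a*b) <= 1.
Proof.
move=> c0 a0 b0.
have N0 : 0 <= b^+2 + c*a*b by rewrite addr_ge0 ?mulr_ge0 ?exprn_ge0.
have ND : b^+2 + c*a*b <= a^+2+b^+2+2*c*a*b.
  have : 0 <= a^+2 + c*a*b by rewrite addr_ge0 ?mulr_ge0 ?exprn_ge0.
  move=> h; rewrite -subr_ge0; apply: le_trans h _; rewrite le_eqVlt; apply/orP; left; apply/eqP; ring.
have [D0|D0] := eqVneq (a^+2+b^+2+2*c*a*b) 0.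
  by rewrite D0 invr0 mulr0 lexx ler01.
have Dp : 0 < a^+2+b^+2+2*c*a*b by rewrite lt_def D0 /=; apply: le_trans ND.
by rewrite divr_ge0 ?(ltW Dp) //= ler_pdivrMr // mul1r.
Qed.

Lemma qmono (c a b a' b' : R) : 0 <= c -> 0 <= a -> 0 <= b -> 0 <= a' -> 0 <= b' ->
  a + b = a' + b' -> b <= b' ->
  (b^+2 + c*a*b)/(a^+2+b^+2+2*c*a*b) <= (b'^+2 + c*a'*b')/(a'^+2+b'^+2+2*c*a'*b').
Proof.
move=> c0 a0 b0 a'0 b'0 hs hb.
have [s0|s0] := eqVneq (a + b) 0.
  have a00 : a = 0 by lra.
  have b00 : b = 0 by lra.
  have a'00 : a' = 0 by lra.
  have b'00 : b' = 0 by lra.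
  by rewrite a00 b00 a'00 b'00 !(mulr0, mul0r, expr0n, addr0, invr0).
have sp : 0 < a + b by rewrite lt_def s0 addr_ge0.
have Dp : 0 < a^+2+b^+2+2*c*a*b.
  have : 0 < a^+2 + b^+2.
    have [ha|ha] := eqVneq a 0.
    - by rewrite ha expr0n add0r exprn_gt0 //; lra.
    - by rewrite ltr_wpDr ?exprn_ge0 // exprn_gt0 // lt_def ha.
  move=> h; apply: lt_le_trans h _; rewrite lerDl !mulr_ge0 //.
have D'p : 0 < a'^+2+b'^+2+2*c*a'*b'.
  have : 0 < a'^+2 + b'^+2.
    have [ha|ha] := eqVneq a' 0.
    - by rewrite ha expr0n add0r exprn_gt0 //; lra.
    - by rewrite ltr_wpDr ?exprn_ge0 // exprn_gt0 // lt_def ha.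
  move=> h; apply: lt_le_trans h _; rewrite lerDl !mulr_ge0 //.
set N := b ^+ 2 + c * a * b. set N' := b' ^+ 2 + c * a' * b'.
set D := a ^+ 2 + b ^+ 2 + 2 * c * a * b. set D' := a' ^+ 2 + b' ^+ 2 + 2 * c * a' * b'.
rewrite -subr_ge0.
have -> : N'/D' - N/D = (N'*D - N*D')/(D*D').
  by field; apply/andP; split; rewrite gt_eqF.
apply: divr_ge0; last by rewrite mulr_ge0 // ltW.
set s := a + b.
have ea' : a' = s - b' by rewrite /s hs; ring.
have ea : a = s - b by rewrite /s; ring.
set u := b - a. set u' := b' - a'.
have es : s = a + b by []. have eu : u = b - a by []. have eu' : u' = b' - a' by [].
have hu : -s <= u <= s by lra.
have hu' : -s <= u' <= s by lra.
have huu : 0 <= u' - u by lra.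
have K1 : 0 <= s^+2 - u*u'.
  have h1 : 0 <= (s - u) * (s + u') by apply: mulr_ge0; lra.
  have h2 : 0 <= (s + u) * (s - u') by apply: mulr_ge0; lra.
  have -> : s^+2 - u*u' = ((s - u) * (s + u') + (s + u) * (s - u'))/2 by field.
  by apply: divr_ge0 => //; apply: addr_ge0.
have K2 : 0 <= s^+2 + u*u'.
  have h1 : 0 <= (s - u) * (s - u') by apply: mulr_ge0; lra.
  have h2 : 0 <= (s + u) * (s + u') by apply: mulr_ge0; lra.
  have -> : s^+2 + u*u' = ((s - u) * (s - u') + (s + u) * (s + u'))/2 by field.
  by apply: divr_ge0 => //; apply: addr_ge0.
have K : 0 <= (s^+2 - u*u') + c * (s^+2 + u*u') by apply: addr_ge0 => //; apply: mulr_ge0.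
have -> : N'*D - N*D' = s * (u' - u) * ((s^+2 - u*u') + c * (s^+2 + u*u')) / 4.
  by rewrite /N /N' /D /D' eu eu' ea' es; field.
apply: divr_ge0 => //; apply: mulr_ge0 => //; apply: mulr_ge0 => //; exact: ltW.
Qed.

Lemma in01_dev n (S : {set 'I_n}) (x' x : @profile R n) :
  in01 x -> in01 x' -> in01 (deviate S x' x).
Proof. by move=> hx hx' i; rewrite /deviate; case: ifP. Qed.

Lemma n1E n (x : @profile R n) : n1 x = #|[pred i | (0 <= x i) && (x i <= 1/2)]|.
Proof. by apply: eq_card => i; rewrite inE; apply/idP/idP => h; [exact: set_mem h | exact: mem_set]. Qed.

Lemma n2E n (x : @profile R n) : n2 x = #|[pred i | (1/2 < x i) && (x i <= 1)]|.
Proof. by apply: eq_card => i; rewrite inE; apply/idP/idP => h; [exact: set_mem h | exact: mem_set]. Qed.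

Lemma n12 n (x : @profile R n) : in01 x -> (n1 x + n2 x = n)%N.
Proof.
move=> hx; rewrite n1E n2E.
rewrite -[in RHS](card_ord n) -(cardC [pred i | (1/2 < x i) && (x i <= 1)]) addnC.
congr (_ + _)%N; apply: eq_card => i; rewrite !inE; have /andP[h0 h1] := hx i.
by rewrite h0 h1 andbT /= -leNgt.
Qed.


Lemma lot_util (q xi : R) : 0 <= q <= 1 -> 0 <= xi <= 1 ->
  utility xi (lottery01 q) = (q * xi + (1 - q) * (1 - xi))%:E.
Proof.
move=> hq /andP[h0 h1]; rewrite utility_lottery // ger0_norm // distrC ger0_norm //.
by rewrite subr_ge0.
Qed.

Lemma gsp_gen n (f : @mechanism R n) (q : @profile R n -> R) :
 (forall x, in01 x -> forall xi, 0 <= xi <= 1 ->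
    utility xi (f x) = (q x * xi + (1 - q x) * (1 - xi))%:E) ->
 (forall x y, in01 x -> in01 y -> (n2 x <= n2 y)%N -> q x <= q y) ->
 group_strategyproof f.
Proof.
move=> hu hq x S x' hx hx' S0.
set y := deviate S x' x.
have hy : in01 y by apply: in01_dev.
case: (ltngtP (n2 x) (n2 y)) => h.
- have [i iS hi] : exists2 i, i \in S & x i <= 1/2.
    apply/exists_inP; apply: contraTT h => /exists_inPn H.
    rewrite -leqNgt !n2E; apply: subset_leq_card; apply/fintype.subsetP => j.
    rewrite !inE /y /deviate; case: ifP => jS //.
    have := H j jS; rewrite -ltNge => hj _.
    by rewrite hj (andP (hx j)).2.
  exists i => //; rewrite !hu ?hx // lee_fin.
  have := hq _ _ hx hy (ltnW h); have := hx i.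
  move=> /andP[a b] c; nra.
- have [i iS hi] : exists2 i, i \in S & 1/2 < x i.
    apply/exists_inP; apply: contraTT h => /exists_inPn H.
    rewrite -leqNgt !n2E; apply: subset_leq_card; apply/fintype.subsetP => j.
    rewrite !inE /y /deviate; case: ifP => jS //.
    have := H j jS; rewrite -leNgt => hj /andP[hj' _].
    by move: (lt_le_trans hj' hj); rewrite ltxx.
  exists i => //; rewrite !hu ?hx // lee_fin.
  have := hq _ _ hy hx (ltnW h); have := hx i.
  move=> /andP[a b] c; nra.
- have /set0Pn [i iS] := S0.
  exists i => //; rewrite !hu ?hx // lee_fin.
  have -> : q y = q x by apply/le_anti; rewrite !hq // h.
  by [].
Qed.


Lemma natr_sum n (x y : @profile R n) : in01 x -> in01 y ->
  (n1 x)%:R + (n2 x)%:R = (n1 y)%:R + (n2 y)%:R :> R.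
Proof. by move=> hx hy; rewrite -!natrD n12 // n12. Qed.

Lemma gsp_form n (g : @profile R n -> R) (c : R) : 0 <= c ->
  (forall x : @profile R n, g x = let a := (n1 x)%:R in let b := (n2 x)%:R in
     (b^+2 + c*a*b)/(a^+2+b^+2+2*c*a*b)) ->
  group_strategyproof (fun x : @profile R n => lottery01 (g x)).
Proof.
move=> c0 hg; apply: (@gsp_gen n _ g).
- by move=> x hx xi hxi; rewrite lot_util // hg; apply: qrange.
- move=> x y hx hy h; rewrite !hg; apply: qmono => //; first exact: natr_sum.
  by rewrite ler_nat.
Qed.
End S.

Theorem lemma2 (R : realType) (n : nat) (p : R) :
  group_strategyproof (@majority_vote R n) /\
  group_strategyproof (@uniform_mech R n) /\
  group_strategyproof (@square_mech R n) /\
  group_strategyproof (@param_mech R p n).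
Proof.
split; last split; last split.
- apply: (@gsp_gen R n _ (fun x => if (n1 x <= n2 x)%N then 1 else 0)).
  + move=> x hx xi /andP[h0 h1]; rewrite /majority_vote; case: ifP => _;
      rewrite utility_dirac; congr EFin.
    * by rewrite subr0 ger0_norm //; ring.
    * by rewrite distrC ger0_norm ?subr_ge0 //; ring.
  + move=> x y hx hy h; have := @n12 R _ _ hx; have := @n12 R _ _ hy.
    case: ifP => hx1; case: ifP => hy1 e1 e2; rewrite ?lexx ?ler01 //.
    exfalso; move/negbT: hy1; rewrite -ltnNge; lia.
- move=> x S x' _ _ S0; have /set0Pn [i iS] := S0.
  by exists i => //; rewrite /uniform_mech.
- apply: (@gsp_form R n _ 0) => // x /=.
  by rewrite !(mulr0, mul0r, addr0).
- apply: (@gsp_form R n _ (2 `^ p)); first exact: powR_ge0.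
  move=> x /=; rewrite /P0 powRD ?powRr1 //; last by rewrite pnatr_eq0 implybT.
  by congr (_ / _); ring.
Qed.
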